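(* In the setting described in the context, suppose there is exactly one buffer pool ($L=1$). Then $M=e'$ and $G=(\lambda^* )'$, and moreover $M\eta q=\eta$ and $MC\,\mathrm{diag}(x^* )A'=e'$.
   Context: Let $I\ge1$, $J\ge I$; each activity $j\in\{1,\dots,J\}$ has a server $s(j)$ and a buffer $b(j)$ in $\{1,\dots,I\}$, with $s(j)=b(j)=j$ for $j\le I$. Let $A_{ij}=\mathbf1\{s(j)=i\}$, $C_{ij}=\mathbf1\{b(j)=i\}$, $\lambda^*\in(0,\infty)^I$, $\mu_j^*=\lambda^*_{s(j)}$, $R_{ij}=\mu_j^*C_{ij}$, $\eta>0$, $q\in(0,1)^I$ with $\sum q_i=1$, $\nu=\eta q$; assume there is a unique $x^*\in\mathbb{R}^J$ with $x^*_j=\min\{\lambda^*_j,\nu_j\}$ for $j\le I$, $Rx^*=\nu$, $Ax^*=e$, $x^*\ge0$. Activity $j$ is basic if $x_j^*>0$. Buffers $i,i'$ communicate directly if there are basic $j,j'$ with $b(j)=i$, $b(j')=i'$, $s(j)=s(j')$; they communicate if linked by a finite chain of directly communicating buffers; the equivalence classes are the buffer pools $\mathcal P_1,\dots,\mathcal P_L$. The server pools are $\mathcal S_l=\{k:\exists\text{ basic } j\text{ with } s(j)=k,\ b(j)\in\mathcal P_l\}$. $M$ is the $L\times I$ matrix $M_{li}=\mathbf 1\{i\in\mathcal P_l\}$, $G$ the $L\times I$ matrix $G_{lk}=\lambda^*_k\mathbf1\{k\in\mathcal S_l\}$, $e$ a vector of ones of appropriate dimension, and $\mathrm{diag}(x^*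 )$ the $J\times J$ diagonal matrix with diagonal $x^*$. *)

(* Defs.v *)
From HB Require Import structures.
From mathcomp Require Import all_boot all_order all_algebra.
Set Implicit Arguments. Unset Strict Implicit. Unset Printing Implicit Defensive.
Import Order.TTheory GRing.Theory Num.Theory.
Local Open Scope ring_scope.

Section Network.
Variables (R : realFieldType) (I J : nat).
Variables (s b : 'I_J -> 'I_I).

Definition Amx : 'M[R]_(I, J) := \matrix_(i, j) (s j == i)%:R.
Definition Cmx : 'M[R]_(I, J) := \matrix_(i, j) (b j == i)%:R.
Definition mu (lam : 'cV[R]_I) (j : 'I_J) : R := lam (s j) 0.
Definition Rmx (lam : 'cV[R]_I) : 'M[R]_(I, J) :=
  \matrix_(i, j) (mu lam j * Cmx i j).
Definition nu (eta : R) (q : 'cV[R]_I) : 'cV[R]_I := eta *: q.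

Definition feasible (lam : 'cV[R]_I) (eta : R) (q : 'cV[R]_I) (y : 'cV[R]_J) :=
  [/\ (forall (i : 'I_I) (j : 'I_J), val j = val i ->
          y j 0 = Num.min (lam i 0) (nu eta q i 0)),
      Rmx lam *m y = nu eta q,
      Amx *m y = const_mx 1
    & forall j, 0 <= y j 0].

Variable x : 'cV[R]_J.

Definition basic (j : 'I_J) : bool := 0 < x j 0.

Definition dcomm : rel 'I_I := fun i i' =>
  [exists j : 'I_J, exists j' : 'I_J,
     [&& basic j, basic j', b j == i, b j' == i' & s j == s j']].

Definition comm : rel 'I_I := connect dcomm.

Definition pools : {set {set 'I_I}} := [set [set i' | comm i i'] | i : 'I_I].

Definition L : nat := #|pools|.
Definition pool (l : 'I_L) : {set 'I_I} := enum_val l.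

Definition server_pool (l : 'I_L) : {set 'I_I} :=
  [set k | [exists j : 'I_J, [&& basic j, s j == k & b j \in pool l]]].

Definition Mmx : 'M[R]_(L, I) := \matrix_(l, i) (i \in pool l)%:R.
Definition Gmx (lam : 'cV[R]_I) : 'M[R]_(L, I) :=
  \matrix_(l, k) (lam k 0 * (k \in server_pool l)%:R).

End Network.

(* Main.v *)
Require Import Defs.
From HB Require Import structures.
From mathcomp Require Import all_boot all_order all_algebra.
Import Order.TTheory GRing.Theory Num.Theory.
Local Open Scope ring_scope.

Theorem lemma4 (R : realFieldType) (I J : nat) (s b : 'I_J -> 'I_I)
  (lam : 'cV[R]_I) (eta : R) (q : 'cV[R]_I) (x : 'cV[R]_J) :
  (1 <= I)%N -> (I <= J)%N ->
  (forall (i : 'I_I) (j : 'I_J), val j = val i -> s j = i /\ b j = i) ->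
  (forall i, 0 < lam i 0) ->
  0 < eta ->
  (forall i, 0 < q i 0 /\ q i 0 < 1) ->
  \sum_(i < I) q i 0 = 1 ->
  feasible s b lam eta q x ->
  (forall y, feasible s b lam eta q y -> y = x) ->
  L s b x = 1%N ->
  [/\ Mmx s b x = const_mx 1,
      Gmx s b x lam = \matrix_(l, k) lam k 0,
      Mmx s b x *m (eta *: q) = const_mx eta
    & Mmx s b x *m Cmx R b *m diag_mx (\row_j x j 0) *m (Amx R s)^T
        = const_mx 1].
Proof.
move=> _ _ _ _ _ _ Hq [_ _ HA Hx0] _ HL.
have Hall : forall (l : 'I_(L s b x)) i, i \in pool l.
  move=> l i; rewrite /pool.
  have := enum_valP l; move: (enum_val l) => Q Hl.
  have HL1 : #|pools s b x| = 1%N by exact HL.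
  have [P HP] := cards1P (introT eqP HL1).
  have E0 : [set i' | comm s b x i i'] \in pools s b x by apply/imsetP; exists i.
  have E1 : [set i' | comm s b x i i'] = P by move: E0; rewrite HP inE => /eqP.
  have E2 : Q = P by move: Hl; rewrite HP inE => /eqP.
  rewrite E2.
  by rewrite -E1 inE; exact: connect0.
have HAk : forall k : 'I_I, \sum_j (s j == k)%:R * x j 0 = 1.
  move=> k; have := congr1 (fun m : 'M[R]_(I,1) => m k 0) HA.
  by rewrite !mxE => E; rewrite -[RHS]E; apply: eq_bigr => j _; rewrite mxE.
have HM : Mmx s b x = const_mx 1.
  by apply/matrixP => l i; rewrite !mxE Hall.
split => //.
- apply/matrixP => l k; rewrite !mxE.
  suff -> : k \in server_pool l by rewrite mulr1.
  rewrite inE; apply: contraT => /negP H.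
  have : \sum_j (s j == k)%:R * x j 0 <= 0 :> R.
    apply: sumr_le0 => j _; case: eqP => [Ej|_]; last by rewrite mul0r.
    rewrite mul1r leNgt; apply/negP => Hj; apply: H; apply/existsP; exists j.
    by rewrite /basic Hj Ej eqxx Hall.
  by rewrite HAk ler10.
- rewrite HM; apply/matrixP => l k; rewrite (ord1 k) !mxE.
  rewrite (eq_bigr (fun i => eta * q i 0)); last by move=> i _; rewrite !mxE mul1r.
  by rewrite -mulr_sumr Hq mulr1.
- rewrite HM; apply/matrixP => l k; rewrite [RHS]mxE -[RHS](HAk k) mxE.
  apply: eq_bigr => j _; rewrite !mxE.
  rewrite (bigD1 j) //= big1 ?addr0; last first.
    by move=> j' Hj; rewrite !mxE (negbTE Hj) mulr0n mulr0.
  have -> : (const_mx 1 *m Cmx R b) l j = 1 :> R.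
    rewrite mxE (eq_bigr (fun i => (b j == i)%:R)); last by move=> i _; rewrite !mxE mul1r.
    rewrite (bigD1 (b j)) //= eqxx big1 ?addr0 //.
    by move=> i Hi; rewrite eq_sym (negbTE Hi).
  by rewrite !mxE eqxx mulr1n mul1r mulrC.
Qed.
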